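(* Let $X$ be a metric space. Let $\varphi\colon[0,1]^2\to X$ be bi-Lipschitz and $\rho_0,\rho_1\colon X\to\mathbb{R}$ Lipschitz, all with the common (bi-)Lipschitz constant $L$, and suppose there are constants $0<m\le M$ with $$\rho_0(x)+m\le\rho_1(x)\le\rho_0(x)+M\quad\text{for all }x\in X.$$ Define $\overline{\varphi}\colon[0,1]^3\to X\times\mathbb{R}$ by $\overline{\varphi}(x,t)=\bigl(\varphi(x),(1-t)\rho_0(\varphi(x))+t\rho_1(\varphi(x))\bigr)$ for $x\in[0,1]^2$, $t\in[0,1]$. Then $\overline{\varphi}$ is bi-Lipschitz onto its image, with a constant $\bar L$ depending only on $L,M,m$, where $X\times\mathbb{R}$ carries the maximum metric $d((x,u),(y,v))=\max\{|x-y|,|u-v|\}$. *)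

(* Defs.v *)
From Stdlib Require Import Reals.
Open Scope R_scope.

Definition is_metric {X : Type} (d : X -> X -> R) : Prop :=
  (forall x y, 0 <= d x y) /\
  (forall x y, d x y = 0 <-> x = y) /\
  (forall x y, d x y = d y x) /\
  (forall x y z, d x z <= d x y + d y z).

Definition dist2 (p q : R * R) : R :=
  sqrt ((fst p - fst q) ^ 2 + (snd p - snd q) ^ 2).

Definition dist3 (p q : (R * R) * R) : R :=
  sqrt ((fst (fst p) - fst (fst q)) ^ 2 + (snd (fst p) - snd (fst q)) ^ 2
        + (snd p - snd q) ^ 2).

Definition in01 (t : R) : Prop := 0 <= t <= 1.
Definition in_square (p : R * R) : Prop := in01 (fst p) /\ in01 (snd p).
Definition in_cube (p : (R * R) * R) : Prop := in_square (fst p) /\ in01 (snd p).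

Definition dist_max {X : Type} (d : X -> X -> R) (p q : X * R) : R :=
  Rmax (d (fst p) (fst q)) (Rabs (snd p - snd q)).

Definition bi_lipschitz_on {A B : Type} (dA : A -> A -> R) (dB : B -> B -> R)
  (P : A -> Prop) (f : A -> B) (L : R) : Prop :=
  forall a b, P a -> P b ->
    dA a b / L <= dB (f a) (f b) /\ dB (f a) (f b) <= L * dA a b.

Definition lipschitz {X : Type} (d : X -> X -> R) (rho : X -> R) (L : R) : Prop :=
  forall x y, Rabs (rho x - rho y) <= L * d x y.

Definition phibar {X : Type} (phi : R * R -> X) (rho0 rho1 : X -> R)
  (p : (R * R) * R) : X * R :=
  let x := fst p in let t := snd p in
  (phi x, (1 - t) * rho0 (phi x) + t * rho1 (phi x)).

(* Main.v *)
Require Import Defs.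
From Stdlib Require Import Reals Lra Psatz.
Open Scope R_scope.

Lemma d3_facts (x y : R * R) (s t : R) :
  forall A, A = (fst x - fst y) ^ 2 + (snd x - snd y) ^ 2 ->
  forall v, v = sqrt (A + (s - t) ^ 2) ->
  v <= sqrt A + Rabs (s - t) /\ sqrt A <= v /\ Rabs (s - t) <= v.
Proof.
  intros A HA' v Hv'. subst v.
  assert (HA : 0 <= A) by (rewrite HA'; pose proof (pow2_ge_0 (fst x - fst y)); pose proof (pow2_ge_0 (snd x - snd y)); lra).
  assert (Hsq : (s - t) ^ 2 = Rabs (s - t) * Rabs (s - t)).
  { rewrite <- pow2_abs. ring. }
  assert (Hd := sqrt_pos A). assert (Ht := Rabs_pos (s - t)).
  assert (HAA := sqrt_sqrt A HA).
  repeat split.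
  - rewrite <- (sqrt_square (sqrt A + Rabs (s - t))) by lra.
    apply sqrt_le_1_alt. nra.
  - apply sqrt_le_1_alt. nra.
  - rewrite <- (sqrt_square (Rabs (s - t))) by lra.
    apply sqrt_le_1_alt. nra.
Qed.

Theorem lemma4p6 :
  forall L M m : R, 0 < L -> 0 < m -> m <= M ->
  exists Lbar : R, 0 < Lbar /\
    forall (X : Type) (d : X -> X -> R) (phi : R * R -> X) (rho0 rho1 : X -> R),
      is_metric d ->
      bi_lipschitz_on dist2 d in_square phi L ->
      lipschitz d rho0 L ->
      lipschitz d rho1 L ->
      (forall x, rho0 x + m <= rho1 x /\ rho1 x <= rho0 x + M) ->
      bi_lipschitz_on dist3 (dist_max d) in_cube (phibar phi rho0 rho1) Lbar.
Proof.
  intros L M m HL Hm HmM.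
  set (K := (L + 1) / m).
  assert (HK : K * m = L + 1) by (unfold K; field; lra).
  assert (HK0 : 0 < K) by (unfold K; apply Rdiv_lt_0_compat; lra).
  exists (L + L * L + M + L + K + 1). split; [nra|].
  intros X d phi r0 r1 Hd Hphi H0 H1 Hg [x s] [y t] [Hx Hs] [Hy Ht].
  simpl in Hx, Hs, Hy, Ht. unfold in01 in Hs, Ht.
  destruct (Hphi x y Hx Hy) as [Hlo Hup].
  unfold phibar, dist_max, dist3, dist2 in *; cbn [fst snd] in *.
  set (A := (fst x - fst y) ^ 2 + (snd x - snd y) ^ 2) in *.
  set (v := sqrt (A + (s - t) ^ 2)) in *.
  destruct (d3_facts x y s t A eq_refl v eq_refl) as [E1 [E2 E3]].
  set (D := d (phi x) (phi y)) in *.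
  set (δ := sqrt A) in *.
  set (τ := Rabs (s - t)) in *.
  assert (Hδ : δ <= L * D).
  { apply Rmult_le_compat_l with (r := L) in Hlo; [|lra].
    replace (L * (δ / L)) with δ in Hlo by (field; lra). exact Hlo. }
  assert (e0 := H0 (phi x) (phi y)). assert (e1 := H1 (phi x) (phi y)).
  fold D in e0, e1.
  assert (e0a := Rle_abs (r0 (phi x) - r0 (phi y))).
  assert (e0b := Rle_abs (- (r0 (phi x) - r0 (phi y)))). rewrite Rabs_Ropp in e0b.
  assert (e1a := Rle_abs (r1 (phi x) - r1 (phi y))).
  assert (e1b := Rle_abs (- (r1 (phi x) - r1 (phi y)))). rewrite Rabs_Ropp in e1b.
  destruct (Hg (phi y)) as [g1 g2].
  set (u := (1 - s) * r0 (phi x) + s * r1 (phi x) -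
            ((1 - t) * r0 (phi y) + t * r1 (phi y))).
  assert (Hu : u = (1 - s) * (r0 (phi x) - r0 (phi y)) + s * (r1 (phi x) - r1 (phi y))
              + (s - t) * (r1 (phi y) - r0 (phi y))) by (unfold u; ring).
  assert (Hτ0 := Rabs_pos (s - t)).
  assert (HD0 : 0 <= D) by (destruct Hd as [Hd0 _]; apply Hd0).
  assert (Hub : Rabs u <= L * D + M * τ /\ m * τ - L * D <= Rabs u).
  { unfold τ. destruct (Rle_or_lt t s) as [Hst|Hst].
    - rewrite (Rabs_right (s - t)) by lra.
      rewrite Hu. split.
      + apply Rabs_le. split; nra.
      + eapply Rle_trans; [|apply Rle_abs]. nra.
    - rewrite (Rabs_left (s - t)) by lra.
      rewrite Hu. split.
      + apply Rabs_le. split; nra.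
      + rewrite <- Rabs_Ropp. eapply Rle_trans; [|apply Rle_abs]. nra. }
  destruct Hub as [Hub Hlb].
  set (dm := Rmax D (Rabs u)).
  assert (Hdm1 : D <= dm) by apply Rmax_l.
  assert (Hdm2 : Rabs u <= dm) by apply Rmax_r.
  assert (Hv0 : 0 <= v) by apply sqrt_pos.
  split.
  - assert (Hτ : τ <= K * dm).
    { apply Rmult_le_reg_r with m; [lra|].
      replace (K * dm * m) with ((K * m) * dm) by ring. rewrite HK. nra. }
    assert (Hv : v <= (L + L * L + M + L + K + 1) * dm) by nra.
    unfold Rdiv. apply Rmult_le_reg_l with (L + L * L + M + L + K + 1); [nra|].
    replace ((L + L * L + M + L + K + 1) * (v * / (L + L * L + M + L + K + 1)))
      with v by (field; nra). exact Hv.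
  - apply Rmax_lub; nra.
Qed.
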